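(* For integers $d \ge 0$ define \[ \textsc{OCB}^*(d) := 0.8948 \int_0^{1/2} \frac{r(1-2r)}{(1-r)^2}\, r^d \, dr, \qquad \textsc{MLB}^*(d) := 0.9 \int_0^{1/2} \frac{(1-2r)^2}{(1-r)^3}\, r^d \, dr . \] Let $\textnormal{\textsc{Thr}}$ be a positive constant with $\textnormal{\textsc{Thr}} \le 1/4678$. Then: (1) for every integer $d \ge 5$, $\textsc{OCB}^*(d) \ge \textsc{MLB}^*(d)$; (2) for every integer $0 \le d \le 4$, $\textsc{OCB}^*(d) \ge \frac{1}{1131} \ge \textnormal{\textsc{Thr}}$ and $\textsc{MLB}^*(d) \ge \frac{1}{1131} \ge \textnormal{\textsc{Thr}}$.
   Context: $\textnormal{\textsc{Thr}}$ is the label-density threshold fixed in the paper; the only property of it used in this statement is $\textnormal{\textsc{Thr}} \le 1/4678$. *)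

(* Defs.v *)
From Stdlib Require Import Reals.
From Coquelicot Require Import Coquelicot.
Open Scope R_scope.

Definition OCBstar (d : nat) : R :=
  (8948 / 10000) * RInt (fun r => r * (1 - 2 * r) / (1 - r) ^ 2 * r ^ d) 0 (1 / 2).

Definition MLBstar (d : nat) : R :=
  (9 / 10) * RInt (fun r => (1 - 2 * r) ^ 2 / (1 - r) ^ 3 * r ^ d) 0 (1 / 2).

(* Main.v *)
Require Import Defs.
From Stdlib Require Import Reals Lra Psatz.
From Coquelicot Require Import Coquelicot.
Open Scope R_scope.

Definition QQ (r:R) := (1-r)^3*(1+3*r+6*r^2).
Lemma QQ_mono a b : 0 <= a -> a <= b -> b <= 1/2 -> QQ b <= QQ a.
Proof.
  intros. unfold QQ.
  assert (E: (1-a)^3*(1+3*a+6*a^2) - (1-b)^3*(1+3*b+6*b^2) = (b-a)*(10*(a*a+a*b+b*b) - 15*(a+b)*(a*a+b*b) + 6*(a*a*a*a+a*a*a*b+a*a*b*b+a*b*b*b+b*b*b*b))) by ring.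
  assert (P: 0 <= 10*(a*a+a*b+b*b) - 15*(a+b)*(a*a+b*b) + 6*(a*a*a*a+a*a*a*b+a*a*b*b+a*b*b*b+b*b*b*b)).
  { assert (0 <= a*b) by nra. assert (0<= a*a) by nra. assert (0 <= b*b) by nra.
    assert (0 <= (1/2-a)*(1/2-b)) by nra.
    assert (0 <= a*a*(1/2-a)) by nra.
    assert (0 <= b*b*(1/2-b)) by nra.
    assert (0 <= a*b*(1-a-b)) by nra.
    nra. }
  nra.
Qed.
Lemma QQ_pos r : 0 <= r -> r <= 1/2 -> 0 < QQ r.
Proof. intros. unfold QQ. apply Rmult_lt_0_compat. apply pow_lt; lra. nra. Qed.

Lemma Phi_mono k a b : 0 <= a -> a <= b -> b <= 1/2 -> a^k / QQ a <= b^k / QQ b.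
Proof.
  intros. pose proof (QQ_mono a b H H0 H1). pose proof (QQ_pos a H ltac:(lra)).
  pose proof (QQ_pos b ltac:(lra) H1).
  assert (a^k <= b^k) by (apply pow_incr; lra).
  assert (0 <= a^k) by (apply pow_le; lra).
  unfold Rdiv. apply Rmult_le_compat; auto.
  left; apply Rinv_0_lt_compat; auto.
  apply Rinv_le_contravar; auto.
Qed.

Definition sD := sqrt 404066704.
Definition cc := (26948 - sD)/17896.
Definition cc' := (26948 + sD)/17896.
Lemma sD_sq : sD * sD = 404066704.
Proof. unfold sD. apply sqrt_sqrt. lra. Qed.
Lemma sD_bounds : 18000 <= sD <= 26948.
Proof. pose proof sD_sq. assert (0 <= sD) by (unfold sD; apply sqrt_pos). nra. Qed.
Lemma cc_bounds : 0 <= cc <= 1/2 /\ 1 <= cc'.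
Proof. pose proof sD_bounds. unfold cc, cc'. split; [split|]; lra. Qed.

Definition gg (x:R) := 8948/10000*x*(1-x) - 9/10*(1-2*x).
Lemma gg_fact r : gg r = 8948/10000*(r-cc)*(cc'-r).
Proof.
  assert (E : gg r - 8948/10000*(r-cc)*(cc'-r) = 8948/10000/(17896^2) * (404066704 - sD*sD)).
  { unfold gg, cc, cc'. field. }
  rewrite sD_sq in E. lra.
Qed.
Definition S12 (x:R) := ((1) + x * ((2) + x * ((3) + x * ((4) + x * ((5) + x * ((6) + x * ((7) + x * ((8) + x * ((9) + x * ((10) + x * ((11) + x * ((12))))))))))))).
Definition T10 (x:R) := ((1) + x * ((3) + x * ((6) + x * ((10) + x * ((15) + x * ((21) + x * ((28) + x * ((36) + x * ((45) + x * ((55))))))))))).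
Definition PO (x:R) := ((0) + x * ((0) + x * ((0) + x * ((0) + x * ((0) + x * ((0) + x * ((1/6) + x * ((0) + x * ((-1/8) + x * ((-2/9) + x * ((-3/10) + x * ((-4/11) + x * ((-5/12) + x * ((-6/13) + x * ((-1/2) + x * ((-8/15) + x * ((-9/16) + x * ((-10/17) + x * ((-4/3)))))))))))))))))))).
Definition PM (x:R) := ((0) + x * ((0) + x * ((0) + x * ((0) + x * ((0) + x * ((1/5) + x * ((-1/6) + x * ((-2/7) + x * ((-1/4) + x * ((-1/9) + x * ((1/10) + x * ((4/11) + x * ((2/3) + x * ((1) + x * ((19/14) + x * ((-8/3) + x * ((55/4)))))))))))))))))).
Definition PH (x:R) := ((0) + x * ((0) + x * ((0) + x * ((0) + x * ((0) + x * ((0) + x * ((-3/20) + x * ((641/2500) + x * ((9/40) + x * ((24763/22500) + x * ((-20211/6250) + x * ((6711/6875))))))))))))).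
Definition lo_o (x:R) := x^5*(1-2*x)*S12 x.
Definition lo_m (x:R) := x^4*(1-2*x)^2*T10 x.
Definition HH (x:R) := (1-2*x)*x^5*(1+3*x+6*x^2)*gg x.

Lemma int_lo_o : RInt lo_o 0 (1/2) = PO (1/2) - PO 0.
Proof.
  apply is_RInt_unique.
  apply (is_RInt_derive PO lo_o).
  - intros x _. unfold PO, lo_o, S12. auto_derive; [trivial | field].
  - intros x _. apply (ex_derive_continuous lo_o). unfold lo_o,S12. auto_derive. trivial.
Qed.
Lemma int_lo_m : RInt lo_m 0 (1/2) = PM (1/2) - PM 0.
Proof.
  apply is_RInt_unique.
  apply (is_RInt_derive PM lo_m).
  - intros x _. unfold PM, lo_m, T10. auto_derive; [trivial | field].
  - intros x _. apply (ex_derive_continuous lo_m). unfold lo_m,T10. auto_derive. trivial.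
Qed.
Lemma int_HH : RInt HH 0 (1/2) = PH (1/2) - PH 0.
Proof.
  apply is_RInt_unique.
  apply (is_RInt_derive PH HH).
  - intros x _. unfold PH, HH, gg. auto_derive; [trivial | field].
  - intros x _. apply (ex_derive_continuous HH). unfold HH,gg. auto_derive. trivial.
Qed.

Lemma val_o : 8948/10000 * (PO (1/2) - PO 0) >= 1/1131.
Proof. unfold PO. lra. Qed.
Lemma val_m : 9/10 * (PM (1/2) - PM 0) >= 1/1131.
Proof. unfold PM. lra. Qed.
Lemma val_h : PH (1/2) - PH 0 > 0.
Proof. unfold PH. lra. Qed.

Lemma RInt_scal_R f a b l : ex_RInt f a b -> RInt (fun x => l * f x) a b = l * RInt f a b.
Proof. intros H. exact (RInt_scal f a b l H). Qed.
Lemma RInt_minus_R f g a b : ex_RInt f a b -> ex_RInt g a b ->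
  RInt (fun x => f x - g x) a b = RInt f a b - RInt g a b.
Proof. intros H1 H2. exact (RInt_minus f g a b H1 H2). Qed.

Ltac exri := match goal with |- ex_RInt ?f _ _ => apply (ex_RInt_continuous f) end; intros z Hz;
  rewrite Rmin_left in Hz by lra; rewrite Rmax_right in Hz by lra;
  match goal with |- continuous ?f _ => apply (ex_derive_continuous f) end; auto_derive; repeat split; try apply pow_nonzero; try nra.

Definition fo d r := r * (1 - 2 * r) / (1 - r) ^ 2 * r ^ d.
Definition fm d r := (1 - 2 * r) ^ 2 / (1 - r) ^ 3 * r ^ d.
Lemma ex_fo d : ex_RInt (fo d) 0 (1/2). Proof. unfold fo. exri. Qed.
Lemma ex_fm d : ex_RInt (fm d) 0 (1/2). Proof. unfold fm. exri. Qed.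
Lemma ex_lo_o : ex_RInt lo_o 0 (1/2). Proof. unfold lo_o, S12. exri. Qed.
Lemma ex_lo_m : ex_RInt lo_m 0 (1/2). Proof. unfold lo_m, T10. exri. Qed.
Lemma ex_HH : ex_RInt HH 0 (1/2). Proof. unfold HH, gg. exri. Qed.

Lemma pw4 x d : 0 < x < 1/2 -> (d <= 4)%nat -> x^4 <= x^d.
Proof. intros Hx Hd.
  assert (h1: x*x <= x) by nra. assert (h2 : x*(x*x) <= x*x) by nra.
  assert (h3 : x*(x*(x*x)) <= x*(x*x)) by nra.
  destruct d as [|[|[|[|[|d]]]]]; try lia; simpl; rewrite ?Rmult_1_r; lra. Qed.

Lemma pt_o x d : 0 < x < 1/2 -> (d <= 4)%nat -> lo_o x <= fo d x.
Proof.
  intros Hx Hd. pose proof (pw4 x d Hx Hd).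
  assert (E: S12 x * (1-x)^2 = 1 - 13*x^12 + 12*x^13) by (unfold S12; ring).
  assert (Hp: 0 < (1-x)^2) by (apply pow_lt; lra).
  assert (HS: S12 x <= / (1-x)^2).
  { apply (Rmult_le_reg_r ((1-x)^2)); auto. rewrite Rinv_l by lra. rewrite E.
    assert (0 <= x^12) by (apply pow_le; lra). assert (x^13 = x^12 * x) by ring. nra. }
  assert (HS0: 0 <= S12 x) by (unfold S12; nra).
  assert (0 <= x^4) by (apply pow_le; lra).
  unfold lo_o, fo, Rdiv.
  replace (x^5*(1-2*x)*S12 x) with ((x*(1-2*x)) * S12 x * x^4) by ring.
  apply Rmult_le_compat; auto.
  - apply Rmult_le_pos; nra.
  - apply Rmult_le_compat_l; nra.
Qed.

Lemma pt_m x d : 0 < x < 1/2 -> (d <= 4)%nat -> lo_m x <= fm d x.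
Proof.
  intros Hx Hd. pose proof (pw4 x d Hx Hd).
  assert (E: T10 x * (1-x)^3 = 1 - x^10*(66 - 120*x + 55*x^2)) by (unfold T10; ring).
  assert (Hp: 0 < (1-x)^3) by (apply pow_lt; lra).
  assert (HS: T10 x <= / (1-x)^3).
  { apply (Rmult_le_reg_r ((1-x)^3)); auto. rewrite Rinv_l by lra. rewrite E.
    assert (0 <= x^10) by (apply pow_le; lra). assert (0 <= 66 - 120*x + 55*x^2) by nra. nra. }
  assert (HS0: 0 <= T10 x) by (unfold T10; nra).
  assert (0 <= x^4) by (apply pow_le; lra).
  unfold lo_m, fm, Rdiv.
  replace (x^4*(1-2*x)^2*T10 x) with ((1-2*x)^2 * T10 x * x^4) by ring.
  apply Rmult_le_compat; auto.
  - apply Rmult_le_pos; nra.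
  - apply Rmult_le_compat_l; nra.
Qed.

Definition FF d r := 8948/10000 * fo d r - 9/10 * fm d r.
Lemma ex_FF d : ex_RInt (FF d) 0 (1/2). Proof. unfold FF, fo, fm. exri. Qed.

Lemma FF_eq k r : 0 <= r <= 1/2 -> FF (5+k) r = HH r * (r^k / QQ r).
Proof.
  intros Hr. pose proof (QQ_pos r ltac:(lra) ltac:(lra)).
  unfold FF, fo, fm, HH, gg. unfold QQ in *. rewrite pow_add.
  assert (1 - r <> 0) by lra. assert (1+3*r+6*r^2 <> 0) by nra.
  field. auto.
Qed.

Lemma pt_F k r : 0 < r < 1/2 -> (cc^k/QQ cc) * HH r <= FF (5+k) r.
Proof.
  intros Hr. rewrite FF_eq by lra.
  destruct cc_bounds as [[H0 H1] H2].
  assert (A: 0 <= (1-2*r)*r^5*(1+3*r+6*r^2)).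
  { assert (0 <= r^5) by (apply pow_le; lra). apply Rmult_le_pos; [apply Rmult_le_pos|]; nra. }
  unfold HH. rewrite gg_fact.
  destruct (Rle_dec r cc) as [Hc|Hc].
  - pose proof (Phi_mono k r cc ltac:(lra) Hc H1). 
    assert (0 <= (cc - r)*(cc'-r)) by nra.
    assert (0 <= (1-2*r)*r^5*(1+3*r+6*r^2) * ((cc - r)*(cc'-r)) * (cc^k/QQ cc - r^k/QQ r)).
    { apply Rmult_le_pos; [apply Rmult_le_pos|]; lra. }
    nra.
  - pose proof (Phi_mono k cc r H0 ltac:(lra) ltac:(lra)).
    assert (0 <= (r - cc)*(cc'-r)) by nra.
    assert (0 <= (1-2*r)*r^5*(1+3*r+6*r^2) * ((r - cc)*(cc'-r)) * (r^k/QQ r - cc^k/QQ cc)).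
    { apply Rmult_le_pos; [apply Rmult_le_pos|]; lra. }
    nra.
Qed.

Lemma part1 d : (5 <= d)%nat -> OCBstar d >= MLBstar d.
Proof.
  intros Hd. replace d with (5 + (d-5))%nat by lia. set (k := (d-5)%nat).
  unfold OCBstar, MLBstar.
  change (fun r => r * (1 - 2 * r) / (1 - r) ^ 2 * r ^ (5+k)) with (fo (5+k)).
  change (fun r => (1 - 2 * r) ^ 2 / (1 - r) ^ 3 * r ^ (5+k)) with (fm (5+k)).
  rewrite <- (RInt_scal_R (fo (5+k))) by apply ex_fo.
  rewrite <- (RInt_scal_R (fm (5+k))) by apply ex_fm.
  assert (RInt (FF (5+k)) 0 (1/2) >= 0).
  { destruct cc_bounds as [[H0 H1] H2].
    assert (Hq : 0 <= cc^k/QQ cc).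
    { unfold Rdiv. apply Rmult_le_pos. apply pow_le; lra. left; apply Rinv_0_lt_compat, QQ_pos; lra. }
    assert (RInt (fun r => (cc^k/QQ cc) * HH r) 0 (1/2) <= RInt (FF (5+k)) 0 (1/2)).
    { apply RInt_le. lra. unfold HH, gg. exri. apply ex_FF. intros; apply pt_F; lra. }
    rewrite RInt_scal_R in H by apply ex_HH. rewrite int_HH in H.
    pose proof val_h. nra. }
  unfold FF in H. rewrite RInt_minus_R in H.
  lra.
  - unfold fo. exri.
  - unfold fm. exri.
Qed.

Lemma part2o d : (d <= 4)%nat -> OCBstar d >= 1/1131.
Proof.
  intros Hd. unfold OCBstar.
  change (fun r => r * (1 - 2 * r) / (1 - r) ^ 2 * r ^ d) with (fo d).
  assert (RInt lo_o 0 (1/2) <= RInt (fo d) 0 (1/2)).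
  { apply RInt_le. lra. apply ex_lo_o. apply ex_fo. intros; apply pt_o; auto. }
  rewrite int_lo_o in H. pose proof val_o. nra.
Qed.

Lemma part2m d : (d <= 4)%nat -> MLBstar d >= 1/1131.
Proof.
  intros Hd. unfold MLBstar.
  change (fun r => (1 - 2 * r) ^ 2 / (1 - r) ^ 3 * r ^ d) with (fm d).
  assert (RInt lo_m 0 (1/2) <= RInt (fm d) 0 (1/2)).
  { apply RInt_le. lra. apply ex_lo_m. apply ex_fm. intros; apply pt_m; auto. }
  rewrite int_lo_m in H. pose proof val_m. nra.
Qed.

Theorem mainTheorem4 (Thr : R) (hpos : 0 < Thr) (hle : Thr <= 1 / 4678) :
  (forall d : nat, (5 <= d)%nat -> OCBstar d >= MLBstar d) /\
  (forall d : nat, (d <= 4)%nat ->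
     (OCBstar d >= 1 / 1131 /\ 1 / 1131 >= Thr) /\
     (MLBstar d >= 1 / 1131 /\ 1 / 1131 >= Thr)).
Proof.
  split.
  - exact part1.
  - intros d Hd. split; split; try lra. apply part2o; auto. apply part2m; auto.
Qed.
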